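(* Let $(R,+,\cdot)$ be a finite simple additively idempotent semiring with $|R|>2$ such that $(R,+)$ has a neutral element $0_R$, and let $(M,+)$ be a finite idempotent sub-irreducible $R$-semimodule. Then $(M,+)$ has a neutral element.
   Context: A semiring is a nonempty set with a commutative semigroup operation $+$ and a semigroup operation $\cdot$ satisfying both distributive laws; simple if its only congruences are the identity and the full relation; additively idempotent if $r+r=r$. An $R$-semimodule is a commutative semigroup $(M,+)$ with an action $R\times M\to M$ satisfying $r(sx)=(rs)x$, $(r+s)x=rx+sx$, $r(x+y)=rx+ry$; idempotent if $x+x=x$. A subsemimodule is a subsemigroup closed under the action. $M$ is quasitrivial if $rx=sx$ for all $r,s,x$; id-quasitrivial if $rx=x$ for all $r,x$; sub-irreducible if not quasitrivial and all proper subsemimodules are id-quasitrivial. *)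

(* Defs.v *)
From mathcomp Require Import all_boot.
Set Implicit Arguments. Unset Strict Implicit. Unset Printing Implicit Defensive.

Definition is_semiring (R : Type) (add mul : R -> R -> R) : Prop :=
  [/\ (forall a b c, add a (add b c) = add (add a b) c),
      (forall a b, add a b = add b a),
      (forall a b c, mul a (mul b c) = mul (mul a b) c),
      (forall a b c, mul a (add b c) = add (mul a b) (mul a c))
    & (forall a b c, mul (add a b) c = add (mul a c) (mul b c))].

Definition is_congruence (R : Type) (add mul : R -> R -> R) (rel : R -> R -> Prop) : Prop :=
  [/\ (forall a, rel a a),
      (forall a b, rel a b -> rel b a),
      (forall a b c, rel a b -> rel b c -> rel a c),
      (forall a b c d, rel a b -> rel c d -> rel (add a c) (add b d))
    & (forall a b c d, rel a b -> rel c d -> rel (mul a c) (mul b d))].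

Definition simple_semiring (R : Type) (add mul : R -> R -> R) : Prop :=
  forall rel, is_congruence add mul rel ->
    (forall a b, rel a b <-> a = b) \/ (forall a b, rel a b).

Definition add_idempotent (T : Type) (add : T -> T -> T) : Prop :=
  forall x, add x x = x.

Definition has_neutral (T : Type) (add : T -> T -> T) : Prop :=
  exists z, forall x, add z x = x /\ add x z = x.

Definition is_semimodule (R M : Type) (addR mulR : R -> R -> R)
    (addM : M -> M -> M) (act : R -> M -> M) : Prop :=
  [/\ (forall x y z, addM x (addM y z) = addM (addM x y) z),
      (forall x y, addM x y = addM y x),
      (forall r s x, act r (act s x) = act (mulR r s) x),
      (forall r s x, act (addR r s) x = addM (act r x) (act s x))
    & (forall r x y, act r (addM x y) = addM (act r x) (act r y))].

Definition is_subsemimodule (R M : Type) (addM : M -> M -> M) (act : R -> M -> M)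
    (S : M -> Prop) : Prop :=
  [/\ (exists x, S x),
      (forall x y, S x -> S y -> S (addM x y))
    & (forall r x, S x -> S (act r x))].

Definition quasitrivial (R M : Type) (act : R -> M -> M) : Prop :=
  forall r s x, act r x = act s x.

Definition id_quasitrivial_on (R M : Type) (act : R -> M -> M) (S : M -> Prop) : Prop :=
  forall r x, S x -> act r x = x.

Definition sub_irreducible (R M : Type) (addM : M -> M -> M) (act : R -> M -> M) : Prop :=
  ~ quasitrivial act /\
  forall S : M -> Prop, is_subsemimodule addM act S -> (exists x, ~ S x) ->
    id_quasitrivial_on act S.

(* Main.v *)
Require Import Defs.
From mathcomp Require Import all_boot.
From Stdlib Require Import Classical.

Theorem proposition2p23 (R M : finType)
    (addR mulR : R -> R -> R) (addM : M -> M -> M) (act : R -> M -> M) :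
  is_semiring addR mulR ->
  simple_semiring addR mulR ->
  add_idempotent addR ->
  2 < #|R| ->
  has_neutral addR ->
  is_semimodule addR mulR addM act ->
  add_idempotent addM ->
  sub_irreducible addM act ->
  has_neutral addM.
Proof.
move=> [aA aC mA dL dR] Hsimp Hid HR [z Hz] [mAs mC mact madd mdist] HidM [Hnq Hsub].
destruct (classic (exists x, forall m, exists r, act r x = m)) as [[x Hx]|Hn].
  exists (act z x) => m; have [r <-] := Hx m.
  have e : addM (act z x) (act r x) = act r x by rewrite -madd (proj1 (Hz r)).
  by split=> //; rewrite mC.
exfalso.
have faith : forall a b, (forall y, act a y = act b y) -> a = b.
  have cg : is_congruence addR mulR (fun a b => forall y, act a y = act b y).
    split=> //.
    - by move=> /=; move=> a b c H1 H2 y; rewrite H1 H2.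
    - by move=> /=; move=> a b c d H1 H2 y; rewrite !madd H1 H2.
    - by move=> /=; move=> a b c d H1 H2 y; rewrite -!mact H2 H1.
  case: (Hsimp _ cg) => [H|H].
    by move=> a b /H.
  by exfalso; apply: Hnq => r s y; apply: H.
have rz : forall t r, mulR t r = r.
  move=> t r; apply: faith => x.
  have [m Hm] : exists m, ~ exists r, act r x = m.
    apply: NNPP => H1; apply: Hn; exists x => m.
    by apply: NNPP => H2; apply: H1; exists m.
  have sub : is_subsemimodule addM act (fun y => exists r, y = act r x).
    split.
    - by exists (act z x), z.
    - by move=> y1 y2 [r1 ->] [r2 ->]; exists (addR r1 r2); rewrite madd.
    - by move=> r1 y [r2 ->]; exists (mulR r1 r2); rewrite mact.
  have := Hsub _ sub (ex_intro _ m (fun H => Hm (let: ex_intro r e := H in ex_intro _ r (esym e)))).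
  by move=> Hq; rewrite -mact; apply: Hq; exists r.
have zsum : forall a c, addR a c = z -> a = z.
  move=> a c H.
  have : addR a (addR a c) = addR a c by rewrite aA Hid.
  by rewrite H (proj2 (Hz a)).
have cg2 : is_congruence addR mulR (fun a b => a = z <-> b = z).
  split.
  - by [].
  - by move=> a b [].
  - by move=> a b c [h1 h2] [h3 h4]; split => ?; auto.
  - move=> a b c d [h1 h2] [h3 h4]; split => H.
      have Ha := zsum _ _ H; rewrite aC in H; have Hc := zsum _ _ H.
      by rewrite (h1 Ha) (h3 Hc) (proj1 (Hz z)).
    have Ha := zsum _ _ H; rewrite aC in H; have Hc := zsum _ _ H.
    by rewrite (h2 Ha) (h4 Hc) (proj1 (Hz z)).
  - by move=> a b c d _ h; rewrite !rz.
have : 1 < #|[set~ z]| by rewrite cardsC1; case: #|R| HR => // [[|n]].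
case/card_gt1P => a [b [Ha Hb Hab]].
rewrite !in_setC1 in Ha Hb.
case: (Hsimp _ cg2) => H.
  have : a = b by apply/H; split => E; [move: Ha; rewrite E eqxx | move: Hb; rewrite E eqxx].
  by move/eqP; rewrite (negbTE Hab).
have := proj1 (H z a) erefl; move/eqP; by rewrite (negbTE Ha).
Qed.
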